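(* Let $R$ be an affine algebra over a field $K$ with no zero divisors which is not amenable. Then there exists a finite-dimensional $K$-subspace $Z\subseteq R$ such that for every nonzero finite-dimensional $K$-subspace $V\subseteq R$, $$\frac{\dim_K(VZ)}{\dim_K(V)}>2.$$
   Context: An affine algebra is a finitely generated associative algebra over $K$, not necessarily unital. For subspaces $V,Z$, $VZ$ denotes the $K$-span of all products $vz$, $v\in V$, $z\in Z$. $R$ is amenable if there exist finite-dimensional $K$-subspaces $W_1\subseteq W_2\subseteq\cdots$ with $\bigcup_nW_n=R$ such that for every $r\in R$, $\lim_{n\to\infty}\dim_K(W_nr+W_n)/\dim_K(W_n)=1$. *)

(* Defs.v *)
(* Non-unital associative K-algebras are modelled as a
   K-vector space R (lmodType K) together with a bilinear associative
   multiplication mul : R -> R -> R. *)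
From HB Require Import structures.
From mathcomp Require Import all_boot all_order all_algebra.
From Stdlib Require Import ClassicalEpsilon.
Set Implicit Arguments. Unset Strict Implicit. Unset Printing Implicit Defensive.
Import Order.TTheory GRing.Theory Num.Theory.
Local Open Scope ring_scope.

Section Defs.
Variables (K : fieldType) (R : lmodType K).

Definition is_algebra_mul (mul : R -> R -> R) : Prop :=
  [/\ forall x y z, mul x (mul y z) = mul (mul x y) z,
      forall a x y z, mul (a *: x + y) z = a *: mul x z + mul y z
    & forall a x y z, mul z (a *: x + y) = a *: mul z x + mul z y].

Inductive in_subalg (mul : R -> R -> R) (g : seq R) : R -> Prop :=
  | SA_gen x : x \in g -> in_subalg mul g x
  | SA_zero : in_subalg mul g 0
  | SA_add x y : in_subalg mul g x -> in_subalg mul g y -> in_subalg mul g (x + y)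
  | SA_scale a x : in_subalg mul g x -> in_subalg mul g (a *: x)
  | SA_mul x y : in_subalg mul g x -> in_subalg mul g y -> in_subalg mul g (mul x y).

Definition affine (mul : R -> R -> R) : Prop :=
  exists g : seq R, forall x, in_subalg mul g x.

Definition no_zero_divisors (mul : R -> R -> R) : Prop :=
  forall x y, mul x y = 0 -> x = 0 \/ y = 0.

(* K-subspaces of R are represented as predicates R -> Prop *)
Definition in_span (s : seq R) (x : R) : Prop :=
  exists c : 'I_(size s) -> K, x = \sum_(i < size s) c i *: s`_i.

Definition free_seq (s : seq R) : Prop :=
  forall c : 'I_(size s) -> K,
    \sum_(i < size s) c i *: s`_i = 0 -> forall i, c i = 0.

Definition fdsub (V : R -> Prop) : Prop :=
  exists s : seq R, forall x, V x <-> in_span s x.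

Definition has_dim (V : R -> Prop) (n : nat) : Prop :=
  exists s : seq R, [/\ size s = n, free_seq s & forall x, V x <-> in_span s x].

(* dim_K V (meaningful for finite-dimensional subspaces V) *)
Definition fdim (V : R -> Prop) : nat :=
  epsilon (inhabits 0%N) (fun n => has_dim V n).

Definition prodsp (mul : R -> R -> R) (V Z : R -> Prop) : R -> Prop :=
  fun x => exists s : seq (K * (R * R)),
    (forall p, p \in s -> V p.2.1 /\ Z p.2.2) /\
    x = \sum_(p <- s) p.1 *: mul p.2.1 p.2.2.

Definition rmulsp (mul : R -> R -> R) (W : R -> Prop) (r : R) : R -> Prop :=
  fun x => exists w, W w /\ x = mul w r.

Definition addsp (A B : R -> Prop) : R -> Prop :=
  fun x => exists a b, [/\ A a, B b & x = a + b].

(* amenability: an exhausting increasing chain of finite-dimensional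
   subspaces W_n with dim(W_n r + W_n)/dim(W_n) -> 1 for every r.
   The limit is written without division:
   |dim(W_n r + W_n) - dim W_n| <= eps * dim W_n eventually
   (equivalent to |ratio - 1| <= eps whenever dim W_n > 0). *)
Definition amenable (mul : R -> R -> R) : Prop :=
  exists W : nat -> (R -> Prop),
    [/\ forall n, fdsub (W n),
        forall n x, W n x -> W n.+1 x,
        forall x, exists n, W n x
      & forall (r : R) (eps : rat), 0 < eps ->
          exists N : nat, forall n : nat, (N <= n)%N ->
            `| (fdim (addsp (rmulsp mul (W n) r) (W n)))%:R
               - (fdim (W n))%:R | <= eps * (fdim (W n))%:R].

End Defs.

(* Main.v *)
Require Import Defs.
From mathcomp Require Import all_boot all_order all_algebra.
From mathcomp Require Import zify.
From Stdlib Require Import ClassicalEpsilon Classical FunctionalExtensionality PropExtensionality.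
Set Implicit Arguments. Unset Strict Implicit. Unset Printing Implicit Defensive.
Import Order.TTheory GRing.Theory Num.Theory.
Local Open Scope ring_scope.

Section Span.
Variables (K : fieldType) (R : lmodType K).
Implicit Types (s t : seq R) (x y : R).

Notation span := (@in_span K R).

Lemma span0 s : span s 0.
Proof. by exists (fun _ => 0); rewrite big1 // => i _; rewrite scale0r. Qed.

Lemma spanD s x y : span s x -> span s y -> span s (x + y).
Proof.
move=> [c ->] [d ->]; exists (fun i => c i + d i).
by rewrite -big_split /=; apply: eq_bigr => i _; rewrite scalerDl.
Qed.

Lemma spanZ s a x : span s x -> span s (a *: x).
Proof.
move=> [c ->]; exists (fun i => a * c i).
by rewrite scaler_sumr; apply: eq_bigr => i _; rewrite scalerA.
Qed.

Lemma span_nth s (i : 'I_(size s)) : span s s`_i.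
Proof.
exists (fun j => (j == i)%:R); rewrite (bigD1 i) //= eqxx scale1r big1 ?addr0 //.
by move=> j /negbTE ->; rewrite scale0r.
Qed.

Lemma span_mem s x : x \in s -> span s x.
Proof.
move=> xs; have hi : (index x s < size s)%N by rewrite index_mem.
by have := span_nth (Ordinal hi); rewrite /= nth_index.
Qed.

Lemma span_sub s (P : R -> Prop) :
  P 0 -> (forall x y, P x -> P y -> P (x + y)) -> (forall a x, P x -> P (a *: x)) ->
  (forall x, x \in s -> P x) -> forall x, span s x -> P x.
Proof.
move=> P0 PD PZ Ps x [c ->]; apply: (big_ind P) => // i _.
by apply: PZ; apply: Ps; apply: mem_nth.
Qed.

Definition spsub s t := forall x, span s x -> span t x.

Lemma spsub_mem s t : (forall x, x \in s -> span t x) -> spsub s t.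
Proof. by move=> H; apply: span_sub => //; [apply: span0|apply: spanD|apply: spanZ]. Qed.

Lemma spsub_trans s t u : spsub s t -> spsub t u -> spsub s u.
Proof. by move=> H1 H2 x /H1 /H2. Qed.

Lemma spsub_catl s t : spsub s (s ++ t).
Proof. by apply: spsub_mem => x xs; apply: span_mem; rewrite mem_cat xs. Qed.

Lemma spsub_catr s t : spsub t (s ++ t).
Proof. by apply: spsub_mem => x xs; apply: span_mem; rewrite mem_cat xs orbT. Qed.

Lemma span_cat s t z : span (s ++ t) z <-> exists a b, [/\ span s a, span t b & z = a + b].
Proof.
split; last first.
  move=> [a [b [Ha Hb ->]]]; apply: spanD; [exact: spsub_catl|exact: spsub_catr].
move: z; apply: span_sub.
  - by exists 0, 0; split; rewrite ?addr0 //; apply: span0.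
  - move=> x y [a [b [Ha Hb ->]]] [a' [b' [Ha' Hb' ->]]].
    exists (a + a'), (b + b'); split; [exact: spanD|exact: spanD|].
    by rewrite addrACA.
  - move=> c x [a [b [Ha Hb ->]]]; exists (c *: a), (c *: b); split;
      [exact: spanZ|exact: spanZ|by rewrite scalerDr].
  - move=> x; rewrite mem_cat => /orP [xs|xt].
      by exists x, 0; split; rewrite ?addr0 //; [apply: span_mem|apply: span0].
    by exists 0, x; split; rewrite ?add0r //; [apply: span0|apply: span_mem].
Qed.

Lemma span_nil x : span [::] x -> x = 0.
Proof. by move=> [c ->]; rewrite big_ord0. Qed.

Lemma freeP s : free_seq s <->
  (forall c : nat -> K, \sum_(i < size s) c i *: s`_i = 0 -> forall i, (i < size s)%N -> c i = 0).
Proof.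
split.
  move=> H c Hc i ilt; exact: (H (fun j => c (val j)) Hc (Ordinal ilt)).
move=> H c Hc i.
pose c' := fun n : nat => oapp c 0 (insub n : option 'I_(size s)).
have E : forall j : 'I_(size s), c' j = c j by move=> j; rewrite /c' valK.
have := H c' _ i (ltn_ord i); rewrite E; apply.
by apply: etrans Hc; apply: eq_bigr => j _; rewrite E.
Qed.

Lemma free_nil : free_seq (R:=R) [::].
Proof. by move=> c _ [i]. Qed.

Lemma free_cons x s : ~ span s x -> free_seq s -> free_seq (x :: s).
Proof.
move=> nx fs c; rewrite big_ord_recl /= => Hc.
have c0 : c ord0 = 0.
  case: (eqVneq (c ord0) 0) => // nz; exfalso; apply: nx.
  exists (fun i => - (c ord0)^-1 * c (lift ord0 i)).
  apply: (scalerI nz); rewrite scaler_sumr.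
  have -> : \sum_(i < size s) c ord0 *: ((- (c ord0)^-1 * c (lift ord0 i)) *: s`_i)
     = - \sum_(i < size s) c (lift ord0 i) *: s`_i.
    rewrite -sumrN; apply: eq_bigr => i _.
    by rewrite scalerA mulrA mulrN mulfV // mulN1r scaleNr.
  by apply/eqP; rewrite -addr_eq0 Hc.
rewrite c0 scale0r add0r in Hc.
move=> i; case: (unliftP ord0 i) => [j ->|->] //.
exact: (fs (fun j => c (lift ord0 j)) Hc j).
Qed.

Lemma basis_ex s : exists b, [/\ free_seq b, spsub b s & spsub s b].
Proof.
elim: s => [|x s [b [fb h1 h2]]].
  by exists [::]; split => //; exact: free_nil.
have sxs : spsub s (x :: s) by exact: (@spsub_catr [:: x] s).
have xxs : span (x :: s) x by apply: span_mem; rewrite inE eqxx.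
case: (classic (span b x)) => hx.
  exists b; split => //; first exact: spsub_trans sxs.
  move=> y /(span_cat [:: x] s) [a [c [Ha Hc ->]]].
  apply: spanD; last exact: h2.
  move: Ha; apply: span_sub => //; [apply: span0|apply: spanD|apply: spanZ|].
  by move=> z; rewrite inE => /eqP ->.
exists (x :: b); split; first exact: free_cons.
  move=> y /(span_cat [:: x] b) [a [c [Ha Hc ->]]].
  apply: spanD; last exact: sxs (h1 _ Hc).
  move: Ha; apply: span_sub => //; [apply: span0|apply: spanD|apply: spanZ|].
  by move=> z; rewrite inE => /eqP ->.
move=> y /(span_cat [:: x] s) [a [c [Ha Hc ->]]].
apply: spanD; first exact: (@spsub_catl [:: x] b).
exact: (@spsub_catr [:: x] b _ (h2 _ Hc)).
Qed.

End Span.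

Section Dim.
Variables (K : fieldType) (R : lmodType K).
Implicit Types (s t : seq R) (x y : R).
Notation span := (@in_span K R).

Lemma steinitz s t : free_seq s -> spsub s t -> (size s <= size t)%N.
Proof.
move=> fs st.
have H : forall i : 'I_(size s), exists c : 'I_(size t) -> K,
    s`_i = \sum_(j < size t) c j *: t`_j.
  by move=> i; exact: st _ (span_nth i).
pose c i := proj1_sig (constructive_indefinite_description _ (H i)).
have cE : forall i : 'I_(size s), s`_i = \sum_(j < size t) c i j *: t`_j.
  by move=> i; rewrite /c; case: constructive_indefinite_description.
pose A := \matrix_(i < size s, j < size t) c i j.
have inj : forall u : 'rV_(size s), u *m A = 0 -> u = 0.
  move=> u uA; apply/matrixP => a i; rewrite (ord1 a) mxE.
  apply: (fs (fun i => u 0 i)).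
  transitivity (\sum_(j < size t) (u *m A) 0 j *: t`_j); last first.
    by rewrite uA big1 // => j _; rewrite mxE scale0r.
  under eq_bigr => i0 _ do rewrite cE scaler_sumr.
  rewrite exchange_big /=; apply: eq_bigr => j _.
  rewrite !mxE scaler_suml; apply: eq_bigr => i0 _.
  by rewrite mxE scalerA.
have rf : row_free A.
  rewrite -kermx_eq0; apply/eqP/row_matrixP => i.
  rewrite row0; apply: inj; apply/eqP; rewrite -sub_kermx; exact: row_sub.
by move/eqP: rf => <-; apply: rank_leq_col.
Qed.

Lemma has_dim_uniq (V : R -> Prop) n m : has_dim V n -> has_dim V m -> n = m.
Proof.
move=> [s [<- fs Vs]] [t [<- ft Vt]].
apply/eqP; rewrite eqn_leq; apply/andP; split.
  by apply: steinitz fs _ => x /Vs /Vt.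
by apply: steinitz ft _ => x /Vt /Vs.
Qed.

Lemma fdimE (V : R -> Prop) n : has_dim V n -> fdim V = n.
Proof.
move=> h; apply: (has_dim_uniq _ h).
by rewrite /fdim; apply: epsilon_spec; exists n.
Qed.

Lemma has_dim_span s : exists b : seq R, [/\ free_seq b, (size b <= size s)%N &
   has_dim (span s) (size b)].
Proof.
have [b [fb h1 h2]] := basis_ex s.
exists b; split => //.
  have := steinitz fb h1; done.
by exists b; split => // x; split; [exact: h2|exact: h1].
Qed.

Definition rank s := fdim (span s).

Lemma rank_basis s : exists b : seq R, [/\ free_seq b, size b = rank s, spsub b s & spsub s b].
Proof.
have [b [fb h1 h2]] := basis_ex s.
exists b; split => //; symmetry; apply: fdimE.
by exists b; split => // x; split; [exact: h2|exact: h1].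
Qed.

Lemma rank_le s t : spsub s t -> (rank s <= rank t)%N.
Proof.
move=> st; have [a [fa <- a1 a2]] := rank_basis s.
have [b [fb <- b1 b2]] := rank_basis t.
apply: steinitz fa _ => x /a1 /st /b2 //.
Qed.

Lemma rank_eq s t : spsub s t -> spsub t s -> rank s = rank t.
Proof. by move=> h1 h2; apply/eqP; rewrite eqn_leq !rank_le. Qed.

Lemma rank_size s : (rank s <= size s)%N.
Proof. by rewrite /rank; have [b [_ h1 /fdimE ->]] := has_dim_span s. Qed.

Lemma rank_free s : free_seq s -> rank s = size s.
Proof. by move=> fs; apply: fdimE; exists s; split. Qed.

Lemma rank_cat s t : (rank (s ++ t) <= rank s + rank t)%N.
Proof.
have [a [fa <- a1 a2]] := rank_basis s.
have [b [fb <- b1 b2]] := rank_basis t.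
rewrite -size_cat; apply: leq_trans (rank_size _).
apply: rank_le => x /span_cat [y [z [Hy Hz ->]]].
by apply/span_cat; exists y, z; split; [exact: a2|exact: b2|].
Qed.

Lemma rank_pos s x : span s x -> x <> 0 -> (1 <= rank s)%N.
Proof.
move=> sx nx.
have f1 : free_seq [:: x].
  apply: free_cons; last exact: free_nil.
  by move/span_nil.
have <- : rank [:: x] = 1%N by rewrite rank_free.
apply: rank_le; apply: spsub_mem => y; rewrite inE => /eqP -> //.
Qed.

Definition lin (f : R -> R) := forall a x y, f (a *: x + y) = a *: f x + f y.

Lemma lin0 f : lin f -> f 0 = 0.
Proof.
move=> lf; have := lf 1 0 0; rewrite !scale1r addr0 => h.
by apply: (addrI (f 0)); rewrite addr0 -h.
Qed.

Lemma linD f : lin f -> forall x y, f (x + y) = f x + f y.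
Proof. by move=> lf x y; have := lf 1 x y; rewrite !scale1r. Qed.

Lemma linZ f : lin f -> forall a x, f (a *: x) = a *: f x.
Proof. by move=> lf a x; rewrite -[a *: x]addr0 lf lin0 // addr0. Qed.

Lemma lin_sum f n (F : 'I_n -> R) : lin f -> f (\sum_(i < n) F i) = \sum_(i < n) f (F i).
Proof.
move=> lf; elim: n F => [|n IH] F; first by rewrite !big_ord0 lin0.
by rewrite !big_ord_recr /= linD // IH.
Qed.

Lemma span_map f s x : lin f -> span s x -> span (map f s) (f x).
Proof.
move=> lf; move: x; apply: span_sub.
- by rewrite lin0 //; apply: span0.
- by move=> x y h1 h2; rewrite linD //; apply: spanD.
- by move=> a x h; rewrite linZ //; apply: spanZ.
- by move=> x xs; apply: span_mem; apply: map_f.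
Qed.

Lemma span_map_inv f s y : lin f -> span (map f s) y -> exists x, span s x /\ y = f x.
Proof.
move=> lf; move: y; apply: span_sub.
- by exists 0; split; [apply: span0|rewrite lin0].
- move=> y1 y2 [x1 [h1 ->]] [x2 [h2 ->]]; exists (x1 + x2); split;
    [exact: spanD|by rewrite linD].
- move=> a y [x [h ->]]; exists (a *: x); split; [exact: spanZ|by rewrite linZ].
- move=> y /mapP [x xs ->]; exists x; split => //; exact: span_mem.
Qed.

Lemma rank_map_le f s : lin f -> (rank (map f s) <= rank s)%N.
Proof.
move=> lf; have [b [fb <- b1 b2]] := rank_basis s.
rewrite -(size_map f b); apply: (leq_trans _ (rank_size (map f b))).
apply: rank_le; move=> y /(span_map_inv lf) [x [hx ->]]; apply: span_map => //; exact: b2.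
Qed.

Lemma free_map f s : lin f -> (forall x, f x = 0 -> x = 0) -> free_seq s -> free_seq (map f s).
Proof.
move=> lf fi /freeP fs; apply/freeP => c; rewrite size_map => Hc i ilt.
apply: fs ilt; apply: fi; rewrite lin_sum //; apply: etrans Hc.
apply: eq_bigr => j _; rewrite linZ //; congr (_ *: _).
by rewrite (nth_map 0).
Qed.

Lemma rank_map f s : lin f -> (forall x, f x = 0 -> x = 0) -> rank (map f s) = rank s.
Proof.
move=> lf fi; apply/eqP; rewrite eqn_leq rank_map_le //=.
have [b [fb <- b1 b2]] := rank_basis s.
have := rank_free (free_map lf fi fb); rewrite size_map => <-.
apply: rank_le => y /(span_map_inv lf) [x [hx ->]]; apply: span_map => //; exact: b1.
Qed.

End Dim.

Section Alg.
Variables (K : fieldType) (R : lmodType K) (mul : R -> R -> R).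
Hypotheses (Halg : is_algebra_mul mul) (Hdom : no_zero_divisors mul).
Implicit Types (s t u v : seq R) (x y z : R).
Notation span := (@in_span K R).
Notation rank := (@rank K R).

Definition ap v t := [seq mul x y | x <- v, y <- t].

Lemma mulA x y z : mul x (mul y z) = mul (mul x y) z.
Proof. by case: Halg. Qed.

Lemma linr z : lin (fun x => mul x z).
Proof. by case: Halg => _ h _ a x y; apply: h. Qed.

Lemma linl z : lin (mul z).
Proof. by case: Halg => _ _ h a x y; apply: h. Qed.

Lemma injr z : z <> 0 -> forall x, mul x z = 0 -> x = 0.
Proof. by move=> nz x /Hdom [] //. Qed.

Lemma injl z : z <> 0 -> forall x, mul z x = 0 -> x = 0.
Proof. by move=> nz x /Hdom [] //. Qed.

Lemma prod_span v t x y : span v x -> span t y -> span (ap v t) (mul x y).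
Proof.
move=> hx hy; move: x hx; apply: span_sub.
- by rewrite (lin0 (linr y)); apply: span0.
- by move=> x1 x2 h1 h2; rewrite (linD (linr y)); apply: spanD.
- by move=> a x h; rewrite (linZ (linr y)); apply: spanZ.
move=> x xv; move: y hy; apply: span_sub.
- by rewrite (lin0 (linl x)); apply: span0.
- by move=> x1 x2 h1 h2; rewrite (linD (linl x)); apply: spanD.
- by move=> a y h; rewrite (linZ (linl x)); apply: spanZ.
by move=> y yt; apply: span_mem; apply: allpairs_f.
Qed.

Lemma prodsp_span v t x : prodsp mul (span v) (span t) x <-> span (ap v t) x.
Proof.
split.
  move=> [s [hs ->]]; elim: s hs => [|p s IH] hs; first by rewrite big_nil; apply: span0.
  rewrite big_cons; apply: spanD; last by apply: IH => q qs; apply: hs; rewrite inE qs orbT.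
  have [h1 h2] := hs p (mem_head _ _).
  by apply: spanZ; apply: prod_span.
move: x; apply: span_sub.
- by exists [::]; split => //; rewrite big_nil.
- move=> x y [s1 [h1 ->]] [s2 [h2 ->]]; exists (s1 ++ s2); split; last by rewrite big_cat.
  by move=> p; rewrite mem_cat => /orP [/h1|/h2] //.
- move=> a x [s1 [h1 ->]]; exists [seq (a * p.1, p.2) | p <- s1]; split.
    by move=> p /mapP [q qs ->]; exact: h1 qs.
  by rewrite big_map scaler_sumr; apply: eq_bigr => p _; rewrite scalerA.
move=> x /allpairsP [[a b] [/= ha hb ->]].
exists [:: (1, (a, b))]; split; last by rewrite big_seq1 scale1r.
by move=> p; rewrite inE => /eqP -> /=; split; apply: span_mem.
Qed.

Lemma rmulsp_span w r x : rmulsp mul (span w) r x <-> span (map (fun y => mul y r) w) x.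
Proof.
split.
  by move=> [y [hy ->]]; apply: (span_map (linr r)).
by move=> /(span_map_inv (linr r)) [y [hy ->]]; exists y.
Qed.

Lemma addsp_span a b x : addsp (span a) (span b) x <-> span (a ++ b) x.
Proof. by rewrite span_cat. Qed.

Lemma ap_congr a a' t t' : spsub a a' -> spsub t t' -> spsub (ap a t) (ap a' t').
Proof.
move=> h1 h2; apply: spsub_mem => x /allpairsP [[y z] [/= hy hz ->]].
by apply: prod_span; [apply: h1|apply: h2]; apply: span_mem.
Qed.

Lemma ap_assoc1 v t u : spsub (ap v (ap t u)) (ap (ap v t) u).
Proof.
apply: spsub_mem => x /allpairsP [[a bc] [/= ha /allpairsP [[b c] [/= hb hc ->]] ->]].
by rewrite mulA; apply: span_mem; apply: allpairs_f => //; apply: allpairs_f.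
Qed.

Lemma ap_assoc2 v t u : spsub (ap (ap v t) u) (ap v (ap t u)).
Proof.
apply: spsub_mem => x /allpairsP [[ab c] [/= /allpairsP [[a b] [/= ha hb ->]] hc ->]].
by rewrite -mulA; apply: span_mem; apply: allpairs_f => //; apply: allpairs_f.
Qed.

End Alg.

Fixpoint itp (K : fieldType) (R : lmodType K) (mul : R -> R -> R) (v zs : seq R) (k : nat) : seq R :=
  match k with 0%N => v | k.+1 => ap mul (itp mul v zs k) zs end.

Section Core.
Variables (K : fieldType) (R : lmodType K) (mul : R -> R -> R).
Hypotheses (Halg : is_algebra_mul mul) (Hdom : no_zero_divisors mul).
Implicit Types (s t u v : seq R) (x y z : R).
Notation span := (@in_span K R).
Notation rank := (@rank K R).
Notation ap := (ap mul).

Hypothesis H : forall zs : seq R, exists v : seq R,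
  (exists x, span v x /\ x <> 0) /\ (rank (ap v zs) <= 2 * rank v)%N.
Hypothesis NotFd : ~ exists s : seq R, forall x, span s x.

Lemma spsub_refl s : spsub s s. Proof. by []. Qed.

Lemma big_free n : exists P : seq R, free_seq P /\ size P = n.
Proof.
elim: n => [|n [P [fP <-]]]; first by exists [::]; split => //; apply: free_nil.
have [x nx] : exists x, ~ span P x.
  by apply: not_all_ex_not => h; apply: NotFd; exists P.
by exists (x :: P); split => //; apply: free_cons.
Qed.

Lemma nonzero_ex : exists z0 : R, z0 <> 0.
Proof.
have [x nx] : exists x, ~ span [::] x.
  by apply: not_all_ex_not => h; apply: NotFd; exists [::].
by exists x => h; apply: nx; rewrite h; apply: span0.
Qed.

Lemma itp_assoc zs v k : spsub (ap v (itp mul zs zs k)) (itp mul v zs k.+1)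
   /\ spsub (itp mul v zs k.+1) (ap v (itp mul zs zs k)).
Proof.
elim: k => [|k [IH1 IH2]] /=; first by split.
split.
  refine (spsub_trans (@ap_assoc1 _ _ _ Halg _ _ _) _).
  by apply: ap_congr => //.
refine (spsub_trans _ (@ap_assoc2 _ _ _ Halg _ _ _)).
by apply: ap_congr => //.
Qed.

Lemma CL rs m D : exists w : seq R,
  (D <= rank w)%N /\ (m.+1 * rank (w ++ ap w rs) <= m.+2 * rank w)%N.
Proof.
have [z0 nz0] := nonzero_ex.
have [P [fP sP]] := big_free (2 * D).
pose zs := z0 :: (map (mul z0) rs ++ P).
have z0zs : z0 \in zs by rewrite inE eqxx.
have [v [[x0 [hx0 nx0]] Hv]] := H (itp mul zs zs m).
pose a j := rank (itp mul v zs j).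
have aM : (a m.+1 <= 2 * a 0)%N.
  have [h1 h2] := itp_assoc zs v m.
  by rewrite /a (rank_eq h2 h1).
have mono1 : forall j, (a j <= a j.+1)%N.
  move=> j; rewrite /a -(rank_map _ (linr Halg z0) (injr Hdom nz0)).
  apply: rank_le; apply: spsub_mem => y /mapP [y' hy' ->].
  by apply: span_mem; apply: allpairs_f.
have mono : forall j k, (j <= k)%N -> (a j <= a k)%N.
  move=> j k /subnK <-; elim: (k - j)%N => [|n IH] //.
  by rewrite addSn; apply: leq_trans IH (mono1 _).
have a1 : (2 * D <= a 1)%N.
  rewrite -sP -(rank_free fP) -(rank_map _ (linl Halg x0) (injl Hdom nx0)).
  apply: rank_le; apply: spsub_mem => y /mapP [p hp ->].
  apply: prod_span => //; apply: span_mem.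
  by rewrite inE mem_cat hp !orbT.
have a0D : (D <= a 0)%N.
  have := mono 1%N m.+1 isT; lia.
have [j [jM hj]] : exists j, (j < m.+1)%N /\ (m.+1 * a j.+1 <= m.+2 * a j)%N.
  apply: NNPP => hn.
  have hn' : forall j, (j < m.+1)%N -> (m.+2 * a j < m.+1 * a j.+1)%N.
    move=> j jl; rewrite ltnNge; apply/negP => hle; apply: hn; exists j; split => //.
  have claim : forall k, (k <= m.+1)%N -> (m.+1 * a 0 + k * (a 0).+1 <= m.+1 * a k)%N.
    elim=> [|k IH] kl; first by rewrite mul0n addn0.
    have := IH (ltnW kl); have := hn' k kl; have := mono 0%N k isT; nia.
  have := claim m.+1 (leqnn _).
  have h3 : (m.+1 * (2 * a 0).+1 <= m.+1 * a m.+1)%N -> ((2 * a 0).+1 <= a m.+1)%N.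
    by rewrite leq_pmul2l.
  move=> hc; have := h3 ltac:(nia); lia.
exists (map (fun y => mul y z0) (itp mul v zs j)).
rewrite (rank_map _ (linr Halg z0) (injr Hdom nz0)); split.
  by apply: leq_trans a0D _; apply: mono.
apply: leq_trans hj; rewrite leq_pmul2l //; apply: rank_le.
apply: spsub_mem => x; rewrite mem_cat => /orP [|].
  by move=> /mapP [y hy ->]; apply: span_mem; apply: allpairs_f.
move=> /allpairsP [[b r] [/= /mapP [y hy ->] hr ->]].
rewrite -(mulA Halg); apply: span_mem; apply: allpairs_f => //.
by rewrite inE mem_cat map_f // orbT.
Qed.

End Core.

Section FL.
Variables (K : fieldType) (R : lmodType K) (mul : R -> R -> R).
Hypotheses (Halg : is_algebra_mul mul) (Hdom : no_zero_divisors mul).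
Implicit Types (s t u v : seq R) (x y z : R).
Notation span := (@in_span K R).
Notation rank := (@rank K R).
Notation ap := (ap mul).

Hypothesis H : forall zs : seq R, exists v : seq R,
  (exists x, span v x /\ x <> 0) /\ (rank (ap v zs) <= 2 * rank v)%N.

Lemma FL rs a m : exists w : seq R, spsub a w /\ forall r, span rs r ->
  (m.+1 * rank (map (fun y => mul y r) w ++ w) <= m.+2 * rank w)%N.
Proof.
case: (classic (exists s : seq R, forall x, span s x)) => [[s hs]|nfd].
  exists s; split; first by move=> x _; apply: hs.
  move=> r hr; have h : (rank (map (fun y => mul y r) s ++ s) <= rank s)%N.
    by apply: rank_le => x _; apply: hs.
  nia.
have [w' [hD hG]] := CL Halg Hdom H nfd rs (2 * m + 1) (4 * m.+1 * rank a).
exists (w' ++ a); split; first exact: spsub_catr.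
move=> r hr.
set F := rank _.
have h1 : (F <= rank (map (fun y => mul y r) w' ++ w') + rank (map (fun y => mul y r) a ++ a))%N.
  apply: leq_trans (rank_cat _ _); apply: rank_le; apply: spsub_mem => x hx.
  apply: span_mem; move: hx; rewrite map_cat !mem_cat.
  by case/orP => [/orP [] | /orP []] ->; rewrite ?orbT.
have h2 : (rank (map (fun y => mul y r) w' ++ w') <= rank (w' ++ ap w' rs))%N.
  apply: rank_le; apply: spsub_mem => x; rewrite mem_cat => /orP [/mapP [y hy ->]|hx].
    by apply: spsub_catr; apply: prod_span => //; apply: span_mem.
  by apply: spsub_catl; apply: span_mem.
have h3 : (rank (map (fun y => mul y r) a ++ a) <= 2 * rank a)%N.
  apply: leq_trans (rank_cat _ _) _.
  have := rank_map_le a (linr Halg r); lia.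
have h4 : (rank w' <= rank (w' ++ a))%N by apply: rank_le; apply: spsub_catl.
have h5 : ((2 * m.+1) * F <= (2 * m.+2) * rank (w' ++ a))%N.
  have e1 : (2 * m + 1).+1 = (2 * m.+1)%N by lia.
  have e2 : (2 * m + 1).+2 = (2 * m.+1).+1 by lia.
  move: hG; rewrite e1 ?e2.
  move: hD h1 h2 h3 h4; set G := rank (w' ++ ap w' rs); set A := rank a;
    set X := rank (_ ++ w'); set Y := rank (_ ++ a); set r' := rank w'; set rho := rank (w' ++ a).
  move=> hD h1 h2 h3 h4 hG.
  nia.
by rewrite -!mulnA leq_pmul2l in h5.
Qed.

End FL.

Fixpoint wsq (K : fieldType) (R : lmodType K) (mul : R -> R -> R) (g : seq R) (n : nat) : seq R :=
  match n with 0%N => g | n.+1 => let w := wsq mul g n in w ++ ap mul w w end.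

Fixpoint chain (T : Type) (f : seq T -> seq T -> nat -> seq T) (ws : nat -> seq T) (n : nat) : seq T :=
  match n with 0%N => [::] | n.+1 => f (ws n.+1) (chain f ws n ++ ws n) n end.

Lemma pred_ext (T : Type) (P Q : T -> Prop) : (forall x, P x <-> Q x) -> P = Q.
Proof.
move=> h; apply: functional_extensionality => x.
by apply: propositional_extensionality.
Qed.

Section Main.
Variables (K : fieldType) (R : lmodType K) (mul : R -> R -> R).
Hypotheses (Halg : is_algebra_mul mul).
Implicit Types (s t u v : seq R) (x y z : R).
Notation span := (@in_span K R).
Notation rank := (@rank K R).

Lemma wsq_mono g n k : (n <= k)%N -> spsub (wsq mul g n) (wsq mul g k).
Proof.
move=> /subnK <-; elim: (k - n)%N => [|d IH] //.
by rewrite addSn /=; refine (spsub_trans IH (@spsub_catl _ _ _ _)).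
Qed.

Lemma wsq_exh g x : in_subalg mul g x -> exists n, span (wsq mul g n) x.
Proof.
elim.
- by move=> y hy; exists 0%N; apply: span_mem.
- by exists 0%N; apply: span0.
- move=> y z _ [n1 h1] _ [n2 h2]; exists (maxn n1 n2); apply: spanD.
    exact: (wsq_mono (leq_maxl n1 n2) h1).
  exact: (wsq_mono (leq_maxr n1 n2) h2).
- by move=> a y _ [n h]; exists n; apply: spanZ.
- move=> y z _ [n1 h1] _ [n2 h2]; exists (maxn n1 n2).+1 => /=.
  apply: spsub_catr; apply: (prod_span Halg).
    exact: (wsq_mono (leq_maxl n1 n2) h1).
  exact: (wsq_mono (leq_maxr n1 n2) h2).
Qed.

Lemma addrm_span w r :
  addsp (rmulsp mul (span w) r) (span w) = span (map (fun y => mul y r) w ++ w).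
Proof.
apply: pred_ext => x; rewrite span_cat; split.
  by move=> [a [b [ha hb ->]]]; exists a, b; split => //; apply/(rmulsp_span Halg).
by move=> [a [b [ha hb ->]]]; exists a, b; split => //; apply/(rmulsp_span Halg).
Qed.

End Main.

Unset Implicit Arguments.

Theorem lemma2 (K : fieldType) (R : lmodType K) (mul : R -> R -> R)
  (Halg : is_algebra_mul mul) (Haff : affine mul)
  (Hdom : no_zero_divisors mul) (Hna : ~ amenable mul) :
  exists Z : R -> Prop, fdsub Z /\
    forall V : R -> Prop, fdsub V -> (exists v, V v /\ v <> 0) ->
      (2 : rat) < (fdim (prodsp mul V Z))%:R / (fdim V)%:R.
Proof.
apply: NNPP => Hneg.
have H : forall zs : seq R, exists v : seq R,
    (exists x, in_span v x /\ x <> 0) /\ (rank (ap mul v zs) <= 2 * rank v)%N.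
  move=> zs; apply: NNPP => hv; apply: Hneg.
  exists (in_span zs); split; first by exists zs.
  move=> V [v hV] [x [Vx nx]].
  have eV : V = in_span v by apply: pred_ext.
  subst V.
  have -> : prodsp mul (in_span v) (in_span zs) = in_span (ap mul v zs).
    by apply: pred_ext => y; apply: prodsp_span.
  have pos := rank_pos Vx nx.
  apply: NNPP => hn; apply: hv; exists v; split; first by exists x.
  have hle : ((rank (ap mul v zs))%:R / (rank v)%:R <= (2 : rat)).
    by rewrite leNgt; apply/negP.
  rewrite ler_pdivrMr ?ltr0n // -natrM ler_nat in hle.
  exact: hle.
apply: Hna.
have [g hg] := Haff.
have FLx := FL Halg Hdom H.
pose f rs a m := proj1_sig (constructive_indefinite_description _ (FLx rs a m)).
have fP : forall rs a m, spsub a (f rs a m) /\ forall r, in_span rs r ->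
    (m.+1 * rank (map (fun y => mul y r) (f rs a m) ++ f rs a m) <= m.+2 * rank (f rs a m))%N.
  by move=> rs a m; rewrite /f; case: constructive_indefinite_description.
pose wc := chain f (wsq mul g).
exists (fun n => in_span (wc n)); split.
- by move=> n; exists (wc n).
- move=> n x hx; have [h1 _] := fP (wsq mul g n.+1) (wc n ++ wsq mul g n) n.
  by apply: h1; apply: spsub_catl.
- move=> x; have [n hn] := wsq_exh Halg (hg x); exists n.+1.
  have [h1 _] := fP (wsq mul g n.+1) (wc n ++ wsq mul g n) n.
  by apply: h1; apply: spsub_catr.
move=> r eps eps0.
have [N0 hN0] := wsq_exh Halg (hg r).
have hi : 0 <= eps^-1 by rewrite invr_ge0 ltW.
have hb := archi_boundP hi.
exists (maxn N0 (Num.bound eps^-1)).+1 => n hn.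
case: n hn => [//|k] hk.
have hk0 : (N0 <= k.+1)%N by apply: leq_trans (leq_maxl _ _) (ltnW hk).
have hkb : (Num.bound eps^-1 <= k.+1)%N by apply: leq_trans (leq_maxr _ _) (ltnW hk).
have [_ h2] := fP (wsq mul g k.+1) (wc k ++ wsq mul g k) k.
have := h2 r (wsq_mono hk0 hN0).
rewrite (addrm_span Halg).
change (chain f (wsq mul g) k.+1) with (wc k.+1).
change (f (wsq mul g k.+1) (wc k ++ wsq mul g k) k) with (wc k.+1).
rewrite -/(rank _) -/(rank _).
set F := rank _; set rho := rank (wc k.+1) => hFr.
have hge : (rho <= F)%N by apply: rank_le; apply: spsub_catr.
have hd : (k.+1 * (F - rho) <= rho)%N by rewrite mulnBr; lia.
rewrite -natrB // ger0_norm ?ler0n //.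
have e1 : (1 : rat) <= eps * (k.+1)%:R.
  rewrite -ler_pdivrMl // mulr1.
  apply: (le_trans (ltW hb)); rewrite ler_nat; exact: hkb.
rewrite -(ler_pM2r (ltr0Sn _ k)).
apply: le_trans (_ : (rho%:R : rat) <= _).
  by rewrite -natrM ler_nat mulnC.
rewrite -mulrA; apply: le_trans (_ : rho%:R * 1 <= _); first by rewrite mulr1.
by rewrite mulrCA; apply: ler_wpM2l; [exact: ler0n|exact: e1].
Qed.
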